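(* Fix $c>0$ and an integer $k\ge1$, and let $\Phi\in\Omega(n,\lfloor c2^n\rfloor)$. Then with probability $1-o(1)$ (as $n\to\infty$), PUR does not reject at any of the stages $n,n-1,\dots,n-k+1$.
   Context: $\mathcal H_n$ is the set of pairs $(P,S)$ with $P\in\{\emptyset,\{1\},\dots,\{n\}\}$, $S\subseteq\{1,\dots,n\}$, $(P,S)\ne(\emptyset,\emptyset)$, representing the Horn clause $\bigvee_{i\in P}x_i\vee\bigvee_{j\in S}\neg x_j$ (so $|\mathcal H_n|\sim n2^n$; the paper writes this number as $(n+2)2^n-1$); $\Omega(n,m)$ is the distribution of the conjunction of $m$ clauses drawn independently, uniformly with repetition from $\mathcal H_n$. Algorithm PUR on a Horn formula $\Phi$: if $\Phi$ has no positive unit clause (single literal $x_i$), accept. Otherwise choose uniformly at random a positive unit clause $x_i$; if $\Phi$ contains the clause $\neg x_i$, reject; otherwise set $x_i=1$ (delete clauses containing $x_i$, delete $\neg x_i$ from the others) and recurse. Stage $t$ is the iteration performed when exactly $t$ variables are unassigned (first iteration = stage $n$). *)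

(* Defs.v *)
From HB Require Import structures.
From mathcomp Require Import all_boot all_order all_algebra.
From mathcomp Require Import all_classical all_reals all_analysis.
Set Implicit Arguments. Unset Strict Implicit. Unset Printing Implicit Defensive.
Import Order.TTheory GRing.Theory Num.Theory.
Local Open Scope ring_scope.

(* A raw clause (P,S): P = Some i means positive literal x_i, None means no
   positive literal; S = set of negated variables.  Variables are 'I_n. *)
Definition rclause (n : nat) := (option 'I_n * {set 'I_n})%type.

Definition horn (n : nat) := {c : rclause n | c != (None, finset.set0)}.

Definition pos_units n (F : seq (rclause n)) : {set 'I_n} :=
  [set i | (Some i, finset.set0) \in F].

Definition has_neg_unit n (F : seq (rclause n)) (i : 'I_n) : bool :=
  (None, [set i]) \in F.

Definition assign_true n (F : seq (rclause n)) (i : 'I_n) : seq (rclause n) :=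
  [seq (c.1, c.2 :\ i) | c <- F & c.1 != Some i].

Fixpoint pur_reject_prob (R : realType) n (j : nat) (F : seq (rclause n)) : R :=
  match j with
  | 0 => 0
  | j'.+1 =>
      if pos_units F == finset.set0 then 0
      else (#|pos_units F|%:R)^-1 *
           \sum_(i in pos_units F)
              (if has_neg_unit F i then 1 else pur_reject_prob R j' (assign_true F i))
  end.

(* Probability, for Phi ~ Omega(n,m) and the internal coin flips of PUR,
   that PUR does not reject at any of the stages n, n-1, ..., n-k+1
   (i.e. during its first k iterations). *)
Definition pur_no_reject_prob (R : realType) (n m k : nat) : R :=
  (#|{: horn n}|%:R ^+ m)^-1 *
  \sum_(Phi : m.-tuple (horn n)) (1 - pur_reject_prob R k (map val Phi)).

(* Main.v *)
Require Import Defs.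
From HB Require Import structures.
From mathcomp Require Import all_boot all_order all_algebra.
From mathcomp Require Import all_classical all_reals all_analysis.
Import Order.TTheory GRing.Theory Num.Theory numFieldNormedType.Exports.
Set Implicit Arguments. Unset Strict Implicit. Unset Printing Implicit Defensive.
Local Open Scope ring_scope.
Fixpoint bad n (j : nat) (F : seq (rclause n)) : bool :=
  if j is j'.+1 then
    [exists i in pos_units F, has_neg_unit F i || bad j' (assign_true F i)]
  else false.

Lemma rej_bound (R : realType) n j (F : seq (rclause n)) :
  0 <= pur_reject_prob R j F <= (bad j F)%:R.
Proof.
elim: j F => [|j IH] F /=; first by rewrite lexx.
case: ifP => [/eqP P0|P0].
  by rewrite lexx /=; apply: ler0n.
have cP : (0 < #|pos_units F|)%N by rewrite card_gt0 P0.
have cR : 0 < (#|pos_units F|%:R : R) by rewrite ltr0n.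
apply/andP; split.
  rewrite mulr_ge0 ?invr_ge0 ?ler0n //; apply: sumr_ge0 => i _.
  by case: ifP => //; case/andP: (IH (assign_true F i)).
case: (boolP [exists _ in _, _]) => [_|nb].
  apply: (@le_trans _ _ (#|pos_units F|%:R^-1 * (1 *+ #|pos_units F|))).
    rewrite ler_wpM2l ?invr_ge0 ?ler0n // -sumr_const.
    apply: ler_sum => i _; case: ifP => // _.
    case/andP: (IH (assign_true F i)) => _ h; apply: (le_trans h).
    by case: bad.
  by rewrite -mulr_natr mul1r mulVf // gt_eqF.
apply: mulr_ge0_le0; first by rewrite invr_ge0 ler0n.
apply: sumr_le0 => i iP.
have : ~~ (has_neg_unit F i || bad j (assign_true F i)).
  by apply: contra nb => h; apply/exists_inP; exists i.
rewrite negb_or => /andP[/negbTE -> /negbTE b].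
by case/andP: (IH (assign_true F i)) => _; rewrite b.
Qed.

Definition G n (A : {set 'I_n}) (F : seq (rclause n)) : seq (rclause n) :=
  [seq (c.1, c.2 :\: A) | c <- F & if c.1 is Some y then y \notin A else true].

Lemma G0 n (F : seq (rclause n)) : G finset.set0 F = F.
Proof.
rewrite /G; elim: F => //= [[[y|] S] F IH] /=; by rewrite ?finset.in_set0 /= finset.setD0 IH.
Qed.

Lemma G_assign n (A : {set 'I_n}) F i : assign_true (G A F) i = G (i |: A) F.
Proof.
rewrite /assign_true /G; elim: F => //= [[[y|] S] F IH] /=.
  rewrite finset.in_setU1 negb_or.
  case: (boolP (y \in A)) => yA /=; rewrite ?andbF /=.
    exact: IH.
  case: (eqVneq y i) => [->|yi] /=; first by rewrite eqxx /= IH.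
  rewrite (inj_eq (@Some_inj _)) yi /=.
  rewrite IH; congr (_ :: _); congr (_, _).
  by apply/setP => x; rewrite !inE; case: (x == i); case: (x \in A); case: (x \in S).
rewrite IH; congr (_ :: _); congr (_, _).
by apply/setP => x; rewrite !inE; case: (x == i); case: (x \in A); case: (x \in S).
Qed.

Lemma memG n (A : {set 'I_n}) F x : x \in G A F ->
  exists2 c, c \in F & [/\ (if c.1 is Some y then y \notin A else true) = true,
                          x.1 = c.1 & x.2 = c.2 :\: A].
Proof. rewrite /G => /mapP [c]; rewrite mem_filter => /andP[h cF] ->. exists c; first by []. split. exact h. by []. by []. Qed.

Definition good n (F : seq (rclause n)) (I : {set 'I_n}) :=
  forall i, i \in I -> exists2 c, c \in F & c.1 = Some i /\ c.2 \subset I.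

Lemma bad_inv n (F : seq (rclause n)) j : forall A, good F A -> bad j (G A F) ->
  exists I : {set 'I_n}, [/\ A \subset I, (#|I| <= #|A| + j)%N, good F I &
             exists2 c, c \in F & c.1 = None /\ c.2 \subset I].
Proof.
elim: j => [|j IH] A gA //=.
case/exists_inP => i; rewrite inE => /memG [c cF [hc e1 e2]].
rewrite /= in e1 e2; rewrite -e1 in hc.
have cA : c.2 \subset A by rewrite -finset.setD_eq0 -e2.
have gi : good F (i |: A).
  move=> x; rewrite finset.in_setU1 => /orP [/eqP ->|xA].
    exists c => //; split; first by [].
    exact: (fintype.subset_trans cA (finset.subsetU1 _ _)).
  case: (gA x xA) => c' c'F [h1 h2]; exists c' => //; split => //.
  exact: (fintype.subset_trans h2 (finset.subsetU1 _ _)).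
case/orP.
  rewrite /has_neg_unit => /memG [c' c'F [_ e1' e2']]; rewrite /= in e1' e2'.
  exists (i |: A); split => //.
  - exact: finset.subsetU1.
  - by rewrite finset.cardsU1 hc addnS add1n ltnS leq_addr.
  - exists c' => //; split => //; apply/fintype.subsetP => x xc.
    rewrite finset.in_setU1; case: (boolP (x \in A)) => xA; rewrite ?orbT //.
    have : x \in c'.2 :\: A by rewrite inE xA xc.
    by rewrite -e2' inE => ->.
rewrite G_assign => /(IH _ gi) [I [s1 s2 s3 s4]].
exists I; split => //.
- exact: (fintype.subset_trans (finset.subsetU1 _ _) s1).
- by move: s2; rewrite finset.cardsU1 hc add1n addSnnS.
Qed.
From mathcomp Require Import zify.
Local Open Scope nat_scope.

Lemma pow_key (m r : nat) : (m ^ r + r * m ^ r.-1 <= m.+1 ^ r)%N.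
Proof.
case: r => [|r] /=; first by rewrite !expn0.
elim: r => [|r IH]; first by rewrite !expn1 mul1n expn0 addn1.
rewrite /= in IH *.
rewrite [m.+1 ^ r.+2]expnS [m ^ r.+2]expnS [m ^ r.+1]expnS.
rewrite expnS in IH.
set a := m ^ r in IH *; set B := m.+1 ^ r.+1 in IH *.
nia.
Qed.

Section Count.
Variable T : finType.

Definition hits (L : seq {set T}) (s : seq T) : bool :=
  all (fun A : {set T} => has (fun x => x \in A) s) L.

Definition Ncount m (L : seq {set T}) : nat := (\sum_(t : m.-tuple T) hits L t)%N.

Lemma sum_tupleS m (F : m.+1.-tuple T -> nat) :
  (\sum_(t : m.+1.-tuple T) F t = \sum_(x : T) \sum_(t : m.-tuple T) F [tuple of x :: t])%N.
Proof.
rewrite pair_big /=.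
rewrite (reindex (fun p : T * m.-tuple T => [tuple of p.1 :: p.2])) //=.
exists (fun t => (thead t, [tuple of behead t])).
  by move=> [x t] _ /=; congr (_, _); apply: val_inj.
by move=> t _; rewrite [in RHS](tuple_eta t).
Qed.

Lemma sum_tuple0 (F : 0.-tuple T -> nat) :
  (\sum_(t : 0.-tuple T) F t = F [tuple])%N.
Proof.
rewrite (eq_bigr (fun _ => F [tuple])) => [|t _]; last by rewrite (tuple0 t).
by rewrite sum_nat_const card_tuple expn0 mul1n.
Qed.

Lemma hits_step (L : seq {set T}) x (t : seq T) :
  (forall y, count (fun A : {set T} => y \in A) L <= 1)%N ->
  (hits L (x :: t) <= hits L t + \sum_(A <- L) (x \in A) * hits (rem A L) t)%N.
Proof.
move=> cL.
case: (boolP (has (fun A : {set T} => x \in A) L)) => [/hasP [A AL xA]|nh].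
  rewrite (perm_big _ (perm_to_rem AL)) big_cons xA mul1n.
  apply: (@leq_trans (hits (rem A L) t)); last by rewrite addnCA leq_addr.
  case: (boolP (hits L (x :: t))) => // hL.
  have c0 : count (fun A : {set T} => x \in A) (rem A L) = 0%N.
    have := cL x; rewrite ((permP (perm_to_rem AL)) (fun A : {set T} => x \in A)) /= xA.
    by rewrite add1n ltnS leqn0 => /eqP.
  rewrite lt0b /hits; apply/seq.allP => B BR.
  have BL := mem_rem BR.
  have := seq.allP hL B BL; rewrite /= => /orP [xB|//].
  have : (0 < count (fun A : {set T} => x \in A) (rem A L))%N.
    by rewrite -has_count; apply/hasP; exists B.
  by rewrite c0.
apply: (@leq_trans (hits L t)); last exact: leq_addr.
rewrite leq_eqVlt; apply/orP; left; apply/eqP.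
rewrite /hits; congr (nat_of_bool _); apply: eq_in_all => B BL /=.
have -> // : (x \in B) = false.
apply/negbTE; apply: contra nh => xB; apply/hasP; exists B => //.
Qed.

Lemma Ncount_bound m : forall L : seq {set T},
  (forall y, count (fun A : {set T} => y \in A) L <= 1)%N ->
  (#|T| ^ size L * Ncount m L <= #|T| ^ m * m ^ size L * \prod_(A <- L) #|A|)%N.
Proof.
elim: m => [|m IH] L cL.
  rewrite /Ncount sum_tuple0; case: L cL => [|A L] cL /=.
    by rewrite big_nil.
  by rewrite muln0.
set h := #|T|; set r := size L; set P := (\prod_(A <- L) #|A|)%N.
have step : (Ncount m.+1 L <= h * Ncount m L +
             \sum_(A <- L) #|A| * Ncount m (rem A L))%N.
  rewrite /Ncount sum_tupleS.
  apply: (@leq_trans (\sum_(x : T) \sum_(t : m.-tuple T)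
     (hits L t + \sum_(A <- L) (x \in A) * hits (rem A L) t))%N).
    by apply: leq_sum => x _; apply: leq_sum => t _; apply: hits_step.
  rewrite leq_eqVlt; apply/orP; left; apply/eqP.
  under eq_bigr => x _ do rewrite big_split /=.
  rewrite big_split /= sum_nat_const.
  congr (_ + _).
  under eq_bigr => x _ do rewrite exchange_big /=.
  rewrite exchange_big /=; apply: eq_big => // A _.
  under eq_bigr => x _ do rewrite -big_distrr /=.
  rewrite -big_distrl /=; congr (_ * _).
  rewrite -sum1_card [RHS]big_mkcond /=; apply: eq_bigr => x _.
  by case: (x \in A).
have T1 : h ^ r * Ncount m L <= h ^ m * m ^ r * P := IH L cL.
have T2 : forall A, A \in L ->
    h ^ r * (#|A| * Ncount m (rem A L)) <= h ^ m.+1 * m ^ r.-1 * P.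
  move=> A AL.
  have sr : size (rem A L) = r.-1 by rewrite size_rem.
  have r0 : 0 < r by rewrite /r; case: (L) AL.
  have cR : forall y, count (fun B : {set T} => y \in B) (rem A L) <= 1.
    move=> y; apply: leq_trans (cL y).
    by rewrite ((permP (perm_to_rem AL)) (fun B : {set T} => y \in B)) /= leq_addl.
  have := IH (rem A L) cR; rewrite sr => H.
  have eP : P = #|A| * \prod_(B <- rem A L) #|B|.
    by rewrite /P (perm_big _ (perm_to_rem AL)) big_cons.
  have er : h ^ r = h * h ^ r.-1 by rewrite -expnS prednK.
  rewrite er eP expnS.
  set N := Ncount m (rem A L) in H *; set Q := \prod_(B <- rem A L) #|B| in H *.
  set a := h ^ r.-1 in H *; set b := h ^ m in H *; set c := m ^ r.-1 in H *.
  have -> : h * a * (#|A| * N) = (h * #|A|) * (a * N) by lia.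
  have -> : h * b * c * (#|A| * Q) = (h * #|A|) * (b * c * Q) by lia.
  exact: leq_mul.
have T3 : \sum_(A <- L) h ^ r * (#|A| * Ncount m (rem A L)) <= r * (h ^ m.+1 * m ^ r.-1 * P).
  rewrite big_seq_cond.
  apply: (@leq_trans (\sum_(A <- L | (A \in L) && true) (h ^ m.+1 * m ^ r.-1 * P))).
    by apply: leq_sum => A /andP [AL _]; apply: T2.
  by rewrite -big_seq_cond big_const_seq count_predT iter_addn_0 mulnC.
have K := pow_key m r.
apply: (@leq_trans (h ^ r * (h * Ncount m L + \sum_(A <- L) #|A| * Ncount m (rem A L)))).
  by rewrite leq_mul2l step orbT.
rewrite mulnDr [h ^ r * \sum_(A <- L) _]big_distrr /=.
apply: (@leq_trans (h * (h ^ m * m ^ r * P) + r * (h ^ m.+1 * m ^ r.-1 * P))).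
  apply: leq_add => //.
  by rewrite mulnCA; apply: leq_mul.
rewrite expnS.
set X := m ^ r in K *; set Y := m ^ r.-1 in K *; set Z := m.+1 ^ r in K *.
set H := h ^ m.
nia.
Qed.
End Count.

Definition Aset n (o : option 'I_n) (I : {set 'I_n}) : {set horn n} :=
  [set x : horn n | ((val x).1 == o) && ((val x).2 \subset I)].

Definition Lt n (t : seq 'I_n) : seq {set horn n} :=
  rcons [seq Aset (Some i) [set x in t] | i <- t] (Aset None [set x in t]).

Lemma card_Aset n o (I : {set 'I_n}) : #|Aset o I| <= 2 ^ #|I|.
Proof.
rewrite -(card_in_imset (f := fun x : horn n => (val x).2) (D := Aset o I)).
  rewrite -card_powerset; apply: subset_leq_card.
  apply/fintype.subsetP => _ /imsetP [x xA ->].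
  by move: xA; rewrite !inE => /andP [_ ->].
move=> x y; rewrite !inE => /andP [/eqP ex _] /andP [/eqP ey _] e2.
by apply: val_inj; rewrite [val x]surjective_pairing [val y]surjective_pairing ex ey e2.
Qed.

Lemma prod_le_const (I : eqType) (L : seq I) (f : I -> nat) c :
  (forall A, A \in L -> f A <= c) -> \prod_(A <- L) f A <= c ^ size L.
Proof.
elim: L => [|A L IH] H; first by rewrite big_nil.
rewrite big_cons expnS /=; apply: leq_mul; first by apply: H; rewrite inE eqxx.
by apply: IH => B BL; apply: H; rewrite inE BL orbT.
Qed.

Lemma Lt_size n (t : seq 'I_n) : size (Lt t) = (size t).+1.
Proof. by rewrite /Lt size_rcons size_map. Qed.

Lemma Lt_prod n (t : seq 'I_n) :
  \prod_(A <- Lt t) #|A| <= (2 ^ size t) ^ (size t).+1.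
Proof.
rewrite -Lt_size; apply: prod_le_const => A.
rewrite /Lt mem_rcons inE => /orP [/eqP ->|/mapP [i _ ->]];
  by apply: leq_trans (card_Aset _ _) _; rewrite leq_exp2l // cardsE card_size.
Qed.

Lemma Lt_count n (t : seq 'I_n) : uniq t ->
  forall y, count (fun A : {set horn n} => y \in A) (Lt t) <= 1.
Proof.
move=> ut y; rewrite /Lt -cats1 count_cat count_map /= addn0.
case e: (val y).1 => [j|].
  have -> : (y \in Aset None [set x in t]) = false.
    by rewrite inE e.
  rewrite addn0; apply: (@leq_trans (count (pred1 j) t)).
    apply: sub_count => i /=; rewrite inE e => /andP [/eqP [->] _].
    by rewrite /= eqxx.
  by rewrite count_uniq_mem // leq_b1.
rewrite (@eq_count _ _ pred0) ?count_pred0 ?add0n ?leq_b1 // => i /=.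
by rewrite inE e.
Qed.

Lemma bad_hits n m k (Phi : m.-tuple (horn n)) : bad k (map val Phi) ->
  exists s : 'I_k.+1, exists t : s.-tuple 'I_n, uniq t && hits (Lt t) Phi.
Proof.
move=> b.
have g0 : good (map val Phi) finset.set0 by move=> i; rewrite finset.in_set0.
rewrite -(G0 (map val Phi)) in b.
have [I [_ sI gI [c cF [c1 c2]]]] := bad_inv g0 b.
rewrite finset.cards0 add0n in sI.
exists (Ordinal (sI : #|I| < k.+1)).
exists (Tuple (enum_tupleP I)).
apply/andP; split; first exact: enum_uniq.
rewrite /Lt /= set_enum.
apply/seq.allP => A; rewrite mem_rcons inE => /orP [/eqP ->|/mapP [i iI ->]].
  case/mapP: cF => x xP ex; apply/hasP; exists x => //.
  by rewrite inE -ex c1 eqxx c2.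
rewrite mem_enum in iI.
have [c' cF' [c1' c2']] := gI i iI.
case/mapP: cF' => x xP ex; apply/hasP; exists x => //.
by rewrite inE -ex c1' eqxx c2'.
Qed.

Lemma bad_le n m k (Phi : m.-tuple (horn n)) :
  bad k (map val Phi) <=
  \sum_(s < k.+1) \sum_(t : s.-tuple 'I_n) (uniq t && hits (Lt t) Phi).
Proof.
case b: bad => //.
have [s [t h]] := bad_hits b.
rewrite (bigD1 s) //= (bigD1 t) //= h.
by rewrite -addnA leq_addr.
Qed.

Lemma term_bound n m (t : seq 'I_n) :
  #|{: horn n}| ^ (size t).+1 *
    \sum_(Phi : m.-tuple (horn n)) (uniq t && hits (Lt t) Phi)
  <= #|{: horn n}| ^ m * m ^ (size t).+1 * (2 ^ size t) ^ (size t).+1.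
Proof.
case ut: (uniq t) => /=; last by rewrite big1 ?muln0.
have := Ncount_bound m (Lt_count ut); rewrite Lt_size => H.
apply: leq_trans H _; apply: leq_mul => //; exact: Lt_prod.
Qed.

Lemma card_setI n : #|{: {set 'I_n}}| = 2 ^ n.
Proof. by rewrite -finset.cardsT -powersetT card_powerset finset.cardsT card_ord. Qed.

Lemma card_horn n : n * 2 ^ n <= #|{: horn n}|.
Proof.
rewrite card_sig.
have -> : #|[pred x : rclause n | x != (None, finset.set0)]| = #|{: rclause n}|.-1.
  by rewrite -(cardC1 (None, finset.set0)).
rewrite card_prod card_option card_ord card_setI.
have : 0 < 2 ^ n by rewrite expn_gt0.
lia.
Qed.

Local Open Scope ring_scope.
From mathcomp Require Import ring lra.

Lemma real_core (R : realType) (c M H N WR : R) (s : nat) :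
  0 < c -> 0 <= M -> 1 <= N -> 0 < H -> 0 <= WR -> M / H <= c / N ->
  M ^+ s.+1 * WR / H ^+ s.+1 * N ^+ s <= c ^+ s.+1 * WR / N.
Proof.
move=> c0 M0 N1 H0 W0 MH.
have N0 : 0 < N by lra.
have q0 : 0 <= M / H by rewrite divr_ge0 // ltW.
have c'0 : 0 <= c / N by rewrite divr_ge0 // ltW.
have := @lerXn2r _ s.+1 (M / H) (c / N); rewrite !nnegrE => /(_ q0 c'0 MH).
rewrite !expr_div_n => hq.
have Ns : N ^+ s != 0 by rewrite expf_neq0 // gt_eqF.
have e : c ^+ s.+1 * WR / N = c ^+ s.+1 / N ^+ s.+1 * WR * N ^+ s.
  rewrite [N ^+ s.+1]exprSr; set a := c ^+ s.+1; set b := N ^+ s.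
  by field; rewrite (gt_eqF N0) Ns.
have e2 : M ^+ s.+1 * WR / H ^+ s.+1 * N ^+ s = M ^+ s.+1 / H ^+ s.+1 * WR * N ^+ s.
  by congr (_ * _); rewrite mulrAC.
rewrite e e2; apply: ler_wpM2r; first by rewrite exprn_ge0 // ltW.
by apply: ler_wpM2r.
Qed.

Lemma nat_div (R : realType) (h Y Z r m : nat) : (0 < h)%N ->
  (h ^ r * Y <= h ^ m * Z)%N -> Y%:R / h%:R ^+ m <= Z%:R / h%:R ^+ r :> R.
Proof.
move=> h0 H.
have hp : forall j, 0 < (h%:R : R) ^+ j by move=> j; rewrite exprn_gt0 // ltr0n.
rewrite ler_pdivrMr // mulrAC ler_pdivlMr // -!natrX -!natrM ler_nat.
by rewrite mulnC [(Z * _)%N]mulnC.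
Qed.

Lemma main_bound (R : realType) (c : R) k n : 0 < c -> (0 < n)%N ->
  1 - (\sum_(s < k.+1) c ^+ s.+1 * ((2 ^ s) ^ s.+1)%:R) / n%:R <=
    pur_no_reject_prob R n (Num.truncn (c * 2 ^+ n)) k <= 1.
Proof.
move=> c0 n0.
set m := Num.truncn (c * 2 ^+ n).
set h := #|{: horn n}|.
set B := fun Phi : m.-tuple (horn n) =>
  (\sum_(s < k.+1) \sum_(t : s.-tuple 'I_n) (uniq t && hits (Lt t) Phi))%N.
have hn : (n * 2 ^ n <= h)%N := card_horn n.
have h0 : (0 < h)%N by apply: leq_trans hn; rewrite muln_gt0 n0 expn_gt0.
have hR : 0 < (h%:R : R) ^+ m by rewrite exprn_gt0 // ltr0n.
have sum1 : \sum_(Phi : m.-tuple (horn n)) (1 : R) = (h%:R : R) ^+ m.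
  by rewrite sumr_const card_tuple natrX.
rewrite /pur_no_reject_prob -/h.
apply/andP; split; last first.
  rewrite ler_pdivrMl // mulr1 -sum1.
  apply: ler_sum => Phi _; case/andP: (rej_bound R k (map val Phi)) => p0 _.
  lra.
have step1 : (h%:R : R) ^+ m - (\sum_(Phi : m.-tuple (horn n)) B Phi)%:R <=
    \sum_(Phi : m.-tuple (horn n)) (1 - pur_reject_prob R k (map val Phi)).
  rewrite natr_sum -sum1 -sumrB; apply: ler_sum => Phi _.
  rewrite lerD2l lerN2.
  case/andP: (rej_bound R k (map val Phi)) => _ p1; apply: le_trans p1 _.
  by rewrite ler_nat bad_le.
have step2 : (\sum_(Phi : m.-tuple (horn n)) B Phi)%:R / (h%:R : R) ^+ m <=
    (\sum_(s < k.+1) c ^+ s.+1 * ((2 ^ s) ^ s.+1)%:R) / n%:R.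
  have E : (\sum_(Phi : m.-tuple (horn n)) B Phi = \sum_(s < k.+1) \sum_(t : s.-tuple 'I_n)
     \sum_(Phi : m.-tuple (horn n)) (uniq t && hits (Lt t) Phi))%N.
    rewrite /B exchange_big /=; apply: eq_bigr => s _; exact: exchange_big.
  rewrite E natr_sum !mulr_suml; apply: ler_sum => s _.
  rewrite natr_sum mulr_suml.
  apply: (@le_trans _ _ (\sum_(t : s.-tuple 'I_n)
        ((m ^ s.+1 * (2 ^ s) ^ s.+1)%N%:R / (h%:R : R) ^+ s.+1))).
    apply: ler_sum => t _; apply: nat_div => //.
    by have := term_bound m t; rewrite size_tuple mulnA.
  rewrite sumr_const card_tuple card_ord -[X in X <= _]mulr_natr natrM.
  rewrite [(m ^ _)%:R]natrX [(n ^ s)%:R]natrX.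
  have Mle : (m%:R : R) <= c * 2 ^+ n.
    by rewrite truncn_le mulr_ge0 // ?exprn_ge0 // ltW.
  have Hge : (n%:R : R) * 2 ^+ n <= h%:R.
    by move: hn; rewrite -(ler_nat R) natrM natrX.
  have N1 : (1 : R) <= n%:R by rewrite ler1n.
  have H0 : (0 : R) < h%:R by rewrite ltr0n.
  apply: real_core => //.
  rewrite ler_pdivrMr //; apply: le_trans Mle _.
  have -> : c * 2 ^+ n = c / n%:R * (n%:R * 2 ^+ n).
    by field; rewrite gt_eqF //; lra.
  by apply: ler_wpM2l => //; rewrite divr_ge0 // ltW //; lra.
apply: (@le_trans _ _ (((h%:R : R) ^+ m)^-1 * ((h%:R : R) ^+ m -
          (\sum_(Phi : m.-tuple (horn n)) B Phi)%:R))); last first.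
  by apply: ler_wpM2l => //; rewrite invr_ge0 ltW.
rewrite mulrBr mulVf ?gt_eqF // lerD2l lerN2 mulrC.
exact: step2.
Qed.

Unset Implicit Arguments.
Local Open Scope classical_set_scope.
Theorem mainTheorem8 (R : realType) (c : R) (k : nat) :
  0 < c -> (1 <= k)%N ->
  (fun n : nat => pur_no_reject_prob R n (Num.truncn (c * 2 ^+ n)) k) @ \oo --> (1 : R).
Proof.
move=> c0 k1.
set K := \sum_(s < k.+1) c ^+ s.+1 * ((2 ^ s) ^ s.+1)%:R.
have K0 : 0 <= K by apply: sumr_ge0 => s _; rewrite mulr_ge0 // exprn_ge0 // ltW.
apply: (@squeeze_cvgr _ _ _ _ (fun n => 1 - 2 * K * harmonic n) (fun _ => 1)).
- apply: filterS (nbhs_infty_gt 0) => n n0.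
  have /andP [h1 h2] := main_bound k c0 n0.
  rewrite h2 andbT; apply: le_trans h1.
  rewrite lerD2l lerN2 /=.
  have : (1 <= n)%N by [].
  rewrite -(ler_nat R) => h.
  rewrite -/K -natr1; set x := n%:R in h *.
  have x0 : 0 < x by lra.
  rewrite ler_pdivrMr // mulrAC ler_pdivlMr; last by lra.
  nra.
- have H : (fun n : nat => 2 * K * harmonic n) @ \oo --> (0 : R).
    have := cvgMl_tmp (a := 2 * K) (@cvg_harmonic R); rewrite mulr0; exact.
  have := cvgB (cvg_cst (1 : R)) H; rewrite subr0; exact.
- exact: cvg_cst.
Qed.
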